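(* Let a group $G$ act properly and isometrically on a proper geodesic metric space $X$ with basepoint $o$, let $f\in G$ be a contracting element, and let $C>0$ be such that every geodesic segment with both endpoints in $\mathrm{Ax}(f)$ is $C$-contracting. Given $r,M>0$, there exist $\hat r=\hat r(r,C,M)$ and $L_1=L_1(C,M)>0$ with the following property. Let $h\in E(f)$ satisfy $d(o,ho)>L_1$, let $g\in G$ and $\theta\in(0,1]$, and let $\alpha,\beta$ be two geodesics from $B(o,M)$ to $B(go,M)$. If $\alpha$ contains a $\theta$-segment with an $(r,h)$-barrier, then $\beta$ contains some $\theta$-segment with an $(\hat r,h)$-barrier.
   Context: A closed $U$ is $C$-contracting if every geodesic $\gamma$ with $d(\gamma,U)\ge C$ has $\mathrm{diam}(\pi_U(\gamma))\le C$ ($\pi_U$ nearest-point projection). An infinite-order $f$ is contracting if $n\mapsto f^no$ is a quasi-isometric embedding with contracting image. $E(f)=\{g\in G:\exists n>0,\ gf^ng^{-1}=f^{\pm n}\}$ is the maximal elementary subgroup containing $f$, and $\mathrm{Ax}(f)=E(f)\cdot o$. A $\theta$-segment of a geodesic $\gamma$ is a closed connected subsegment of length $\theta\ell(\gamma)$. A segment $\sigma$ has an $(r,h)$-barrier if there is $t\in G$ with $d(to,\sigma)\le r$ and $d(tho,\sigma)\le r$. *)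

(* Defs.v *)
From Stdlib Require Import Reals Lra ZArith List.
Set Implicit Arguments.
Open Scope R_scope.

Record MetricSpace := {
  mpt :> Type;
  mdist : mpt -> mpt -> R;
  dist_ge0 : forall x y, 0 <= mdist x y;
  dist_eq0 : forall x y, mdist x y = 0 <-> x = y;
  dist_sym : forall x y, mdist x y = mdist y x;
  dist_tri : forall x y z, mdist x z <= mdist x y + mdist y z }.
Arguments mdist {m} x y.

Record Group := {
  gel :> Type;
  gmul : gel -> gel -> gel;
  ginv : gel -> gel;
  gone : gel;
  gmulA : forall a b c, gmul a (gmul b c) = gmul (gmul a b) c;
  gmul1l : forall a, gmul gone a = a;
  gmul1r : forall a, gmul a gone = a;
  gmulVl : forall a, gmul (ginv a) a = gone;
  gmulVr : forall a, gmul a (ginv a) = gone }.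
Arguments gmul {g} a b.
Arguments ginv {g} a.
Arguments gone {g}.

Definition gpow (G : Group) (g : G) (n : Z) : G :=
  match n with
  | Z0 => gone
  | Zpos p => Nat.iter (Pos.to_nat p) (gmul g) gone
  | Zneg p => Nat.iter (Pos.to_nat p) (gmul (ginv g)) gone
  end.

Arguments gpow {G} g n.

Definition isometric_action (G : Group) (X : MetricSpace) (act : G -> X -> X) :=
  (forall x, act gone x = x) /\
  (forall g h x, act (gmul g h) x = act g (act h x)) /\
  (forall g x y, mdist (act g x) (act g y) = mdist x y).

Arguments isometric_action {G X} act.

(* metrically proper: for every ball B(x,r), only finitely many g with gB ∩ B ≠ ∅ *)
Definition proper_action (G : Group) (X : MetricSpace) (act : G -> X -> X) :=
  forall (x : X) (r : R), exists l : list G, forall g : G,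
    (exists y : X, mdist x y <= r /\ mdist x (act g y) <= r) -> In g l.

Arguments proper_action {G X} act.

Definition is_geodesic (X : MetricSpace) (l : R) (gam : R -> X) :=
  0 <= l /\ forall s t, 0 <= s <= l -> 0 <= t <= l -> mdist (gam s) (gam t) = Rabs (s - t).

Arguments is_geodesic {X} l gam.

Definition seg (X : MetricSpace) (gam : R -> X) (a b : R) : X -> Prop :=
  fun x => exists s, a <= s <= b /\ x = gam s.

Arguments seg {X} gam a b.

Definition geodesic_space (X : MetricSpace) :=
  forall x y : X, exists l gam, is_geodesic l gam /\ gam 0 = x /\ gam l = y.

(* proper: closed balls are (sequentially) compact *)
Definition proper_space (X : MetricSpace) :=
  forall (x : X) (r : R) (u : nat -> X), (forall n, mdist x (u n) <= r) ->
    exists (phi : nat -> nat) (y : X),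
      (forall n, (phi n < phi (S n))%nat) /\ mdist x y <= r /\
      Un_cv (fun n => mdist (u (phi n)) y) 0.

Definition closed_set (X : MetricSpace) (U : X -> Prop) :=
  forall x, (forall eps, 0 < eps -> exists u, U u /\ mdist x u < eps) -> U x.

Arguments closed_set {X} U.

Definition dist_set_le (X : MetricSpace) (x : X) (U : X -> Prop) (r : R) :=
  forall eps, 0 < eps -> exists u, U u /\ mdist x u < r + eps.

Arguments dist_set_le {X} x U r.

Definition nearest (X : MetricSpace) (U : X -> Prop) (x u : X) :=
  U u /\ forall v, U v -> mdist x u <= mdist x v.

Arguments nearest {X} U x u.

Definition contracting_set (X : MetricSpace) (C : R) (U : X -> Prop) :=
  closed_set U /\
  forall l gam, is_geodesic l gam ->
    (forall t u, 0 <= t <= l -> U u -> C <= mdist (gam t) u) ->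
    forall t1 t2 p q, 0 <= t1 <= l -> 0 <= t2 <= l ->
      nearest U (gam t1) p -> nearest U (gam t2) q -> mdist p q <= C.

Arguments contracting_set {X} C U.

(* f is contracting: infinite order, n |-> f^n o is a QI embedding of Z
   with contracting image *)
Definition contracting_element (G : Group) (X : MetricSpace) (act : G -> X -> X)
    (o : X) (f : G) :=
  (forall n : Z, n <> 0%Z -> gpow f n <> gone) /\
  (exists lam c, 1 <= lam /\ 0 <= c /\ forall m n : Z,
     / lam * Rabs (IZR (m - n)) - c <= mdist (act (gpow f m) o) (act (gpow f n) o) /\
     mdist (act (gpow f m) o) (act (gpow f n) o) <= lam * Rabs (IZR (m - n)) + c) /\
  (exists C', contracting_set C' (fun x => exists n : Z, x = act (gpow f n) o)).

Arguments contracting_element {G X} act o f.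

Definition Ef (G : Group) (f : G) : G -> Prop :=
  fun g => exists n : Z, (0 < n)%Z /\
    (gmul (gmul g (gpow f n)) (ginv g) = gpow f n \/
     gmul (gmul g (gpow f n)) (ginv g) = gpow f (- n)).

Arguments Ef {G} f _.

Definition Ax (G : Group) (X : MetricSpace) (act : G -> X -> X) (o : X) (f : G) : X -> Prop :=
  fun x => exists g, Ef f g /\ x = act g o.

Arguments Ax {G X} act o f _.

Definition has_barrier_theta_seg (G : Group) (X : MetricSpace) (act : G -> X -> X)
    (o : X) (r : R) (h : G) (theta : R) (l : R) (gam : R -> X) :=
  exists a, 0 <= a /\ a + theta * l <= l /\
    exists t : G, dist_set_le (act t o) (seg gam a (a + theta * l)) r /\
                  dist_set_le (act (gmul t h) o) (seg gam a (a + theta * l)) r.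
Arguments has_barrier_theta_seg {G X} act o r h theta l gam.

(* Main.v *)
Require Import Defs.
From Stdlib Require Import Reals ZArith.
From Stdlib Require Import Lra Lia Classical.
Open Scope R_scope.
Set Implicit Arguments.

Lemma mtri (X : MetricSpace) (x y z : X) : mdist x z <= mdist x y + mdist y z.
Proof. exact (Defs.dist_tri X x y z). Qed.
Lemma msym (X : MetricSpace) (x y : X) : mdist x y = mdist y x.
Proof. exact (Defs.dist_sym X x y). Qed.

Arguments mtri {X} x y z.
Arguments msym {X} x y.

Lemma Rmin_spec a b : Rmin a b <= a /\ Rmin a b <= b /\ (Rmin a b = a \/ Rmin a b = b).
Proof. unfold Rmin; destruct Rle_dec; lra. Qed.

Lemma geo_d (X : MetricSpace) l (g : R -> X) a b :
  is_geodesic l g -> 0 <= a <= l -> 0 <= b <= l -> a <= b -> mdist (g a) (g b) = b - a.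
Proof. intros [_ H] Ha Hb Hab. rewrite H by lra. rewrite Rabs_left1 by lra. ring. Qed.

Lemma geo_le (X : MetricSpace) l (g : R -> X) a b :
  is_geodesic l g -> 0 <= a <= l -> 0 <= b <= l -> mdist (g a) (g b) <= Rabs (a - b).
Proof. intros [_ H] Ha Hb. rewrite H by lra. lra. Qed.

Lemma geo_restr (X : MetricSpace) l (g : R -> X) s :
  is_geodesic l g -> 0 <= s <= l -> is_geodesic s g.
Proof. intros [H0 H] Hs. split; [lra|]. intros; apply H; lra. Qed.

Lemma geo_rev (X : MetricSpace) l (g : R -> X) :
  is_geodesic l g -> is_geodesic l (fun s => g (l - s)).
Proof. intros [H0 H]. split; [lra|]. intros s t Hs Ht. rewrite H by lra.
  replace (l - s - (l - t)) with (-(s - t)) by ring. apply Rabs_Ropp. Qed.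

Lemma geo_len (X : MetricSpace) l (g : R -> X) : is_geodesic l g -> mdist (g 0) (g l) = l.
Proof. intros Hg. pose proof Hg as [H0 _]. rewrite (geo_d Hg) by lra. ring. Qed.

Lemma near_exists (X : MetricSpace) l (g : R -> X) (z : X) :
  is_geodesic l g -> exists u, nearest (seg g 0 l) z u.
Proof.
  intros Hg. pose proof Hg as [Hl _].
  set (cl := fun s => Rmax 0 (Rmin l s)).
  assert (Hcl : forall s, 0 <= cl s <= l).
  { intro s; unfold cl, Rmax, Rmin; destruct (Rle_dec l s); destruct Rle_dec; lra. }
  assert (Hcl2 : forall s, 0 <= s <= l -> cl s = s).
  { intros s Hs; unfold cl, Rmax, Rmin; destruct (Rle_dec l s); destruct Rle_dec; lra. }
  assert (Hlip : forall s t, Rabs (cl s - cl t) <= Rabs (s - t)).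
  { intros s t; unfold cl, Rmax, Rmin.
    destruct (Rle_dec l s); destruct (Rle_dec l t); repeat destruct Rle_dec;
    unfold Rabs; repeat destruct Rcase_abs; lra. }
  set (F := fun s => mdist z (g (cl s))).
  destruct (continuity_ab_min F 0 l Hl) as [m [Hm1 Hm2]].
  { intros c _. unfold continuity_pt, continue_in, limit1_in, limit_in. intros eps He.
    exists eps; split; [lra|]. intros x [_ Hx]. simpl in *. unfold R_dist in *.
    unfold F. pose proof (mtri z (g (cl x)) (g (cl c))) as T1.
    pose proof (mtri z (g (cl c)) (g (cl x))) as T2.
    pose proof (geo_le Hg (Hcl x) (Hcl c)) as T3.
    pose proof (Hlip x c). rewrite (msym (g (cl c))) in T2.
    unfold Rabs in *; repeat destruct Rcase_abs; lra. }
  exists (g m). split.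
  - exists m; split; [lra|reflexivity].
  - intros v [s [Hs ->]]. pose proof (Hm1 s Hs). unfold F in H. rewrite !Hcl2 in H by lra. exact H.
Qed.


Section Contr.
Variable X : MetricSpace.
Variable U : X -> Prop.
Variable C : R.
Hypothesis HC0 : 0 < C.
Hypothesis HC : forall l gam, is_geodesic l gam ->
    (forall t u, 0 <= t <= l -> U u -> C <= mdist (gam t) u) ->
    forall t1 t2 p q, 0 <= t1 <= l -> 0 <= t2 <= l ->
      nearest U (gam t1) p -> nearest U (gam t2) q -> mdist p q <= C.
Hypothesis Hnear : forall z, exists u, nearest U z u.

Lemma entry l (sg : R -> X) p q : is_geodesic l sg ->
  nearest U (sg 0) p -> nearest U (sg l) q -> C < mdist p q ->
  exists s, 0 <= s <= l /\ mdist (sg s) p <= 2 * C + 2.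
Proof.
  intros Hg Hp Hq Hpq. pose proof Hg as [Hl _].
  destruct (classic (exists u, U u /\ mdist (sg 0) u < C)) as [[u [Hu Hd]]|Hno].
  { exists 0; split; [lra|]. destruct Hp as [_ Hp]. pose proof (Hp u Hu). lra. }
  set (A := fun s => 0 <= s <= l /\ forall s', 0 <= s' <= s -> forall u, U u -> C <= mdist (sg s') u).
  assert (A0 : A 0).
  { split; [lra|]. intros s' Hs' u Hu. replace s' with 0 by lra.
    apply Rnot_lt_le. intro H. apply Hno. exists u; auto. }
  assert (Hnl : ~ A l).
  { intros [_ Hal]. assert (mdist p q <= C).
    { apply (@HC l sg Hg (fun t u Ht Hu => Hal t Ht u Hu) 0 l p q); auto; lra. } lra. }
  destruct (completeness A) as [m [Hub Hlub]].
  { exists l. intros s [Hs _]. lra. }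
  { exists 0; exact A0. }
  assert (Hm0 : 0 <= m) by (apply Hub; exact A0).
  assert (Hml : m <= l) by (apply Hlub; intros s [Hs _]; lra).
  assert (Hbelow : forall s', 0 <= s' < m -> forall u, U u -> C <= mdist (sg s') u).
  { intros s' Hs' u Hu. destruct (classic (exists a, A a /\ s' < a)) as [[a [[Ha1 Ha2] Hsa]]|Hna].
    - apply Ha2; auto; lra.
    - exfalso. assert (m <= s'); [|lra]. apply Hlub. intros a Ha.
      apply Rnot_lt_le. intro H. apply Hna. exists a; auto. }
  assert (Hs1 : exists s1, A s1 /\ m - /2 < s1).
  { apply NNPP. intro Hn. assert (m <= m - /2); [|lra]. apply Hlub. intros a Ha.
    apply Rnot_lt_le. intro H. apply Hn. exists a; split; auto. }
  destruct Hs1 as [s1 [[Hs1a Hs1b] Hs1m]].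
  assert (Hs1le : s1 <= m) by (apply Hub; split; auto).
  set (s := Rmin (m + /2) l).
  destruct (Rmin_spec (m + /2) l) as [Hsa [Hsb Hsc]]. fold s in Hsa, Hsb, Hsc.
  assert (HnA : ~ A s).
  { intro HA. destruct Hsc as [Hsc|Hsc].
    - pose proof (Hub s HA). lra.
    - apply Hnl. rewrite <- Hsc. exact HA. }
  assert (Hex : exists s', 0 <= s' <= s /\ exists u, U u /\ mdist (sg s') u < C).
  { apply NNPP. intro Hn. apply HnA. split; [lra|]. intros s' Hs' u Hu.
    apply Rnot_lt_le. intro H. apply Hn. exists s'; split; auto. exists u; auto. }
  destruct Hex as [s' [Hs' [u [Hu Hdu]]]].
  assert (Hs'm : m <= s').
  { apply Rnot_lt_le. intro H. pose proof (Hbelow s' (conj (proj1 Hs') H) u Hu). lra. }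
  destruct (Hnear (sg s1)) as [p1 Hp1].
  assert (Hpp1 : mdist p p1 <= C).
  { apply (@HC s1 sg (geo_restr Hg Hs1a) (fun t u Ht Hu => Hs1b t Ht u Hu) 0 s1 p p1); auto; lra. }
  assert (Hd1 : mdist (sg s1) p1 <= mdist (sg s1) u) by (apply (proj2 Hp1); auto).
  pose proof (mtri (sg s1) (sg s') u).
  pose proof (geo_le Hg Hs1a (conj (proj1 Hs') (Rle_trans _ _ _ (proj2 Hs') Hsb))).
  exists s'. split; [lra|].
  pose proof (mtri (sg s') (sg s1) p1). pose proof (mtri (sg s') p1 p).
  rewrite (msym (sg s') (sg s1)) in *. rewrite (msym p1 p) in *.
  unfold Rabs in *; destruct Rcase_abs; lra.
Qed.

Lemma entry_rev l (sg : R -> X) p q : is_geodesic l sg ->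
  nearest U (sg 0) p -> nearest U (sg l) q -> C < mdist p q ->
  exists s, 0 <= s <= l /\ mdist (sg s) q <= 2 * C + 2.
Proof.
  intros Hg Hp Hq Hpq. pose proof Hg as [Hl _].
  destruct (@entry l (fun s => sg (l - s)) q p (geo_rev Hg)) as [s [Hs Hd]].
  - replace (l - 0) with l by ring. exact Hq.
  - replace (l - l) with 0 by ring. exact Hp.
  - rewrite msym; exact Hpq.
  - exists (l - s); split; [lra|exact Hd].
Qed.

Lemma coarse_lip l (tau : R -> X) p q : is_geodesic l tau ->
  nearest U (tau 0) p -> nearest U (tau l) q -> mdist p q <= 4 * C + 4 + l.
Proof.
  intros Hg Hp Hq. pose proof Hg as [Hl _].
  destruct (Rle_lt_dec (mdist p q) C) as [H|H]; [lra|].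
  destruct (entry Hg Hp Hq H) as [s [Hs Hds]].
  destruct (entry_rev Hg Hp Hq H) as [s' [Hs' Hds']].
  pose proof (geo_le Hg Hs Hs'). pose proof (mtri p (tau s) q) as T1. pose proof (mtri (tau s) (tau s') q).
  rewrite (msym p (tau s)) in T1. unfold Rabs in *; destruct Rcase_abs; lra.
Qed.

Lemma proj_near (x y : X) la (al : R -> X) s1 s2 R0 p :
  U x -> U y -> (forall u, U u -> mdist x u + mdist u y = mdist x y) ->
  is_geodesic la al -> 0 <= s1 -> s1 <= s2 -> s2 <= la ->
  mdist (al s1) x <= R0 -> mdist (al s2) y <= R0 ->
  nearest U (al 0) p -> mdist p x <= 2 * C + 2 + 2 * R0.
Proof.
  intros Ux Uy Hbt Hg H1 H12 H2 Hx Hy Hp.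
  destruct (Hnear (al s1)) as [w Hw].
  assert (Hwx : mdist (al s1) w <= mdist (al s1) x) by (apply (proj2 Hw); auto).
  destruct (Rle_lt_dec (mdist p w) C) as [H|H].
  - pose proof (mtri p w x). pose proof (mtri w (al s1) x). rewrite (msym w (al s1)) in *. lra.
  - destruct (entry (geo_restr Hg (conj H1 (Rle_trans _ _ _ H12 H2))) Hp Hw H) as [se [Hse Hde]].
    assert (E1 : mdist (al se) (al s2) = s2 - se) by (apply (geo_d Hg); lra).
    assert (E2 : mdist (al se) (al s1) = s1 - se) by (apply (geo_d Hg); lra).
    assert (E3 : mdist (al s1) (al s2) = s2 - s1) by (apply (geo_d Hg); lra).
    pose proof (mtri (al se) p y). pose proof (mtri (al se) y (al s2)).
    pose proof (mtri p (al se) x). pose proof (mtri (al se) (al s1) x).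
    pose proof (mtri x (al s1) y). pose proof (mtri (al s1) (al s2) y).
    pose proof (Hbt p (proj1 Hp)).
    pose proof (msym p (al se)). pose proof (msym y (al s2)). pose proof (msym x (al s1)).
    pose proof (msym x p). lra.
Qed.

Lemma core (Hgs : geodesic_space X) (x y : X) la (al : R -> X) lb (be : R -> X) s1 s2 R0 M :
  U x -> U y -> (forall u, U u -> mdist x u + mdist u y = mdist x y) ->
  is_geodesic la al -> 0 <= s1 -> s1 <= s2 -> s2 <= la ->
  mdist (al s1) x <= R0 -> mdist (al s2) y <= R0 ->
  is_geodesic lb be -> mdist (al 0) (be 0) <= 2 * M -> mdist (al la) (be lb) <= 2 * M ->
  2 * (2 * C + 2 + 2 * R0) + 2 * (4 * C + 4 + 2 * M) + C < mdist x y ->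
  (exists u, 0 <= u <= lb /\ mdist (be u) x <= 2 * C + 2 + (2 * C + 2 + 2 * R0) + (4 * C + 4 + 2 * M)) /\
  (exists u, 0 <= u <= lb /\ mdist (be u) y <= 2 * C + 2 + (2 * C + 2 + 2 * R0) + (4 * C + 4 + 2 * M)).
Proof.
  intros Ux Uy Hbt Ha H1 H12 H2 Hx Hy Hb Hab0 Habl HD.
  destruct (Hnear (al 0)) as [p Hp].
  pose proof (proj_near Ux Uy Hbt Ha H1 H12 H2 Hx Hy Hp) as Hpx.
  destruct (Hnear (al la)) as [pa Hpa].
  assert (Hpay : mdist pa y <= 2 * C + 2 + 2 * R0).
  { apply (@proj_near y x la (fun s => al (la - s)) (la - s2) (la - s1) R0 pa); auto; try lra.
    - intros u Hu. rewrite (msym y u), (msym u x), (msym y x). rewrite <- (Hbt u Hu). ring.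
    - apply geo_rev; auto.
    - cbn beta. replace (la - (la - s2)) with s2 by ring. exact Hy.
    - cbn beta. replace (la - (la - s1)) with s1 by ring. exact Hx.
    - cbn beta. replace (la - 0) with la by ring. exact Hpa. }
  destruct (Hnear (be 0)) as [pb0 Hpb0].
  destruct (Hnear (be lb)) as [pb1 Hpb1].
  assert (Hc0 : mdist p pb0 <= 4 * C + 4 + 2 * M).
  { destruct (Hgs (al 0) (be 0)) as [l [tau [Ht [T0 Tl]]]].
    pose proof (geo_len Ht) as Hl. rewrite T0, Tl in Hl.
    rewrite <- T0 in Hp. rewrite <- Tl in Hpb0.
    pose proof (coarse_lip Ht Hp Hpb0). lra. }
  assert (Hc1 : mdist pa pb1 <= 4 * C + 4 + 2 * M).
  { destruct (Hgs (al la) (be lb)) as [l [tau [Ht [T0 Tl]]]].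
    pose proof (geo_len Ht) as Hl. rewrite T0, Tl in Hl.
    rewrite <- T0 in Hpa. rewrite <- Tl in Hpb1.
    pose proof (coarse_lip Ht Hpa Hpb1). lra. }
  pose proof (mtri x p pb0). pose proof (mtri x pb0 pb1). pose proof (mtri x pb1 y).
  pose proof (mtri pb1 pa y). pose proof (msym x p). pose proof (msym pb1 pa).
  assert (Hbig : C < mdist pb0 pb1) by lra.
  destruct (entry Hb Hpb0 Hpb1 Hbig) as [u1 [Hu1 Hd1]].
  destruct (entry_rev Hb Hpb0 Hpb1 Hbig) as [u2 [Hu2 Hd2]].
  split.
  - exists u1; split; auto. pose proof (mtri (be u1) pb0 x). pose proof (mtri pb0 p x).
    pose proof (msym pb0 p). lra.
  - exists u2; split; auto. pose proof (mtri (be u2) pb1 y). pose proof (mtri pb1 pa y). lra.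
Qed.

End Contr.

Unset Implicit Arguments.

Theorem lemma4p3 (G : Group) (X : MetricSpace) (act : G -> X -> X) (o : X) (f : G) (C : R) :
  isometric_action act -> proper_action act -> proper_space X -> geodesic_space X ->
  contracting_element act o f -> 0 < C ->
  (forall (l : R) (gam : R -> X), is_geodesic l gam ->
     Ax act o f (gam 0) -> Ax act o f (gam l) -> contracting_set C (seg gam 0 l)) ->
  forall M : R, 0 < M ->
  exists L1 : R, 0 < L1 /\
  forall r : R, 0 < r ->
  exists rhat : R,
  forall (h g : G) (theta : R) (la : R) (alpha : R -> X) (lb : R) (beta : R -> X),
    Ef f h -> L1 < mdist o (act h o) ->
    0 < theta <= 1 ->
    is_geodesic la alpha -> mdist o (alpha 0) <= M -> mdist (act g o) (alpha la) <= M ->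
    is_geodesic lb beta -> mdist o (beta 0) <= M -> mdist (act g o) (beta lb) <= M ->
    has_barrier_theta_seg act o r h theta la alpha ->
    has_barrier_theta_seg act o rhat h theta lb beta.
Proof.
  intros Hiso _ _ Hgs _ HC0 Hax M HM.
  destruct Hiso as [Hact1 [Hactm Hacti]].
  exists 1. split; [lra|]. intros r Hr.
  pose (R0 := r + 1). pose (K1 := 2 * C + 2 + 2 * R0). pose (P := 4 * C + 4 + 2 * M).
  pose (T := 2 * K1 + 2 * P + C + 1). pose (K := 2 * C + 2 + K1 + P).
  pose (Q := 2 * M + K + R0). pose (E := 4 * M + 2 * Q).
  assert (eR0 : R0 = r + 1) by reflexivity. assert (eK1 : K1 = 2 * C + 2 + 2 * R0) by reflexivity.
  assert (eP : P = 4 * C + 4 + 2 * M) by reflexivity. assert (eT : T = 2 * K1 + 2 * P + C + 1) by reflexivity.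
  assert (eK : K = 2 * C + 2 + K1 + P) by reflexivity. assert (eQ : Q = 2 * M + K + R0) by reflexivity.
  assert (eE : E = 4 * M + 2 * Q) by reflexivity.
  exists (T + M + K + E + 1).
  intros h g th la al lb be Hh HL Hth Ha Ha0 Hal Hb Hb0 Hbl Hbar.
  pose proof Ha as [Hla _]. pose proof Hb as [Hlb _].
  destruct (Hgs o (act h o)) as [D [gm [Hgm [Hgm0 HgmD]]]].
  pose proof (geo_len Hgm) as HD. rewrite Hgm0, HgmD in HD.
  destruct (Rle_lt_dec D T) as [Hsmall|Hlarge].
  { exists 0. split; [lra|]. split; [nra|]. exists gone. split; intros eps He; exists (be 0);
      (split; [exists 0; split; [nra|reflexivity]|]).
    - rewrite Hact1. lra.
    - rewrite (gmul1l G). pose proof (mtri (act h o) o (be 0)). pose proof (msym (act h o) o). lra. }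
  destruct Hbar as [a [Ha1 [Ha2 [t [Ht1 Ht2]]]]].
  destruct (Ht1 1 Rlt_0_1) as [pt1 [[s1 [Hs1 ->]] Hd1]].
  destruct (Ht2 1 Rlt_0_1) as [pt2 [[s2 [Hs2 ->]] Hd2]].
  assert (Hthla : 0 <= th * la) by nra.
  assert (Hinv : forall z w, mdist (act (ginv t) z) w = mdist z (act t w)).
  { intros z w. rewrite <- (Hacti t). rewrite <- Hactm, (gmulVr G), Hact1. reflexivity. }
  set (al' := fun s => act (ginv t) (al s)). set (be' := fun s => act (ginv t) (be s)).
  assert (Ha' : is_geodesic la al').
  { split; [lra|]. intros; unfold al'; rewrite Hacti; apply Ha; auto. }
  assert (Hb' : is_geodesic lb be').
  { split; [lra|]. intros; unfold be'; rewrite Hacti; apply Hb; auto. }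
  set (U := seg gm 0 D).
  assert (Uo : U o) by (exists 0; split; [lra|auto]).
  assert (Uho : U (act h o)) by (exists D; split; [lra|auto]).
  assert (Hbt : forall u, U u -> mdist o u + mdist u (act h o) = mdist o (act h o)).
  { intros u [c [Hc ->]]. rewrite <- Hgm0 at 1. rewrite <- HgmD at 1.
    rewrite (geo_d Hgm (a:=0) (b:=c)) by lra. rewrite (geo_d Hgm (a:=c) (b:=D)) by lra. lra. }
  assert (Hcon : contracting_set C U).
  { apply Hax; auto.
    - rewrite Hgm0. exists gone. split; [|symmetry; apply Hact1].
      exists 1%Z. split; [lia|]. left. rewrite (gmul1l G).
      assert (E1 : ginv (gone : G) = gone).
      { rewrite <- (gmul1l G (ginv gone)). apply (gmulVr G). }
      rewrite E1, (gmul1r G). reflexivity.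
    - rewrite HgmD. exists h. auto. }
  destruct Hcon as [_ HC].
  assert (Hnear : forall z, exists u, nearest U z u) by (intro z; apply (near_exists z Hgm)).
  assert (Hx1 : mdist (al' s1) o <= R0).
  { unfold al'. rewrite Hinv, msym. lra. }
  assert (Hy1 : mdist (al' s2) (act h o) <= R0).
  { unfold al'. rewrite Hinv, <- Hactm, msym. lra. }
  assert (Hab0 : mdist (al' 0) (be' 0) <= 2 * M).
  { unfold al', be'. rewrite Hacti. pose proof (mtri (al 0) o (be 0)). pose proof (msym o (al 0)). lra. }
  assert (Habl : mdist (al' la) (be' lb) <= 2 * M).
  { unfold al', be'. rewrite Hacti. pose proof (mtri (al la) (act g o) (be lb)).
    pose proof (msym (act g o) (al la)). lra. }
  assert (HDbig : 2 * (2 * C + 2 + 2 * R0) + 2 * (4 * C + 4 + 2 * M) + C < mdist o (act h o)) by lra.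
  assert (Hs1r : 0 <= s1 <= la) by lra. assert (Hs2r : 0 <= s2 <= la) by lra.
  assert (Hcore : (exists u, 0 <= u <= lb /\ mdist (be' u) o <= K) /\
                  (exists u, 0 <= u <= lb /\ mdist (be' u) (act h o) <= K)).
  { destruct (Rle_lt_dec s1 s2) as [H12|H21].
    - destruct (core HC0 HC Hnear Hgs o (act h o) Uo Uho Hbt Ha' (proj1 Hs1r) H12 (proj2 Hs2r) Hx1 Hy1 Hb' Hab0 Habl HDbig)
        as [[u1 [Hu1 Hd1']] [u2 [Hu2 Hd2']]].
      split; [exists u1|exists u2]; split; auto; lra.
    - assert (Hbt' : forall u, U u -> mdist (act h o) u + mdist u o = mdist (act h o) o).
      { intros u Hu. rewrite (msym (act h o) u), (msym u o), (msym (act h o) o). rewrite <- (Hbt u Hu). ring. }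
      rewrite msym in HDbig.
      destruct (core HC0 HC Hnear Hgs (act h o) o Uho Uo Hbt' Ha' (proj1 Hs2r) (Rlt_le _ _ H21) (proj2 Hs1r) Hy1 Hx1 Hb' Hab0 Habl HDbig)
        as [[u1 [Hu1 Hd1']] [u2 [Hu2 Hd2']]].
      split; [exists u2|exists u1]; split; auto; lra. }
  destruct Hcore as [[u1 [Hu1 Hbu1]] [u2 [Hu2 Hbu2]]].
  unfold be' in Hbu1, Hbu2. rewrite Hinv in Hbu1, Hbu2. rewrite <- Hactm in Hbu2.
  pose proof (geo_len Ha) as Hla'. pose proof (geo_len Hb) as Hlb'.
  assert (Hab0' : mdist (al 0) (be 0) <= 2 * M).
  { pose proof (mtri (al 0) o (be 0)). pose proof (msym o (al 0)). lra. }
  assert (Habl' : mdist (al la) (be lb) <= 2 * M).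
  { pose proof (mtri (al la) (act g o) (be lb)). pose proof (msym (act g o) (al la)). lra. }
  assert (Hlalb : la <= lb + 4 * M).
  { pose proof (mtri (al 0) (be 0) (al la)). pose proof (mtri (be 0) (be lb) (al la)).
    pose proof (msym (be lb) (al la)). lra. }
  assert (Hpos : forall (ti : G) si ui, 0 <= si <= la -> 0 <= ui <= lb ->
            mdist (act ti o) (al si) < r + 1 -> mdist (be ui) (act ti o) <= K -> Rabs (ui - si) <= Q).
  { intros ti si ui Hsi Hui H1 H2.
    assert (E1 : mdist (be 0) (be ui) = ui) by (rewrite (geo_d Hb (a:=0) (b:=ui)); lra).
    assert (E2 : mdist (al 0) (al si) = si) by (rewrite (geo_d Ha (a:=0) (b:=si)); lra).
    pose proof (mtri (be 0) (al 0) (be ui)). pose proof (mtri (al 0) (al si) (be ui)).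
    pose proof (mtri (al si) (act ti o) (be ui)).
    pose proof (mtri (al 0) (be 0) (al si)). pose proof (mtri (be 0) (be ui) (al si)).
    pose proof (mtri (be ui) (act ti o) (al si)).
    pose proof (msym (be 0) (al 0)). pose proof (msym (al si) (act ti o)). pose proof (msym (act ti o) (be ui)).
    pose proof (msym (be ui) (al si)).
    unfold Rabs; destruct Rcase_abs; lra. }
  pose proof (Hpos t s1 u1 Hs1r Hu1 Hd1 Hbu1) as Hq1.
  pose proof (Hpos (gmul t h) s2 u2 Hs2r Hu2 Hd2 Hbu2) as Hq2.
  assert (Hthlb : 0 <= th * lb <= lb) by nra.
  assert (Hthd : th * la <= th * lb + 4 * M) by nra.
  set (a' := Rmin (Rmin u1 u2) (lb - th * lb)).
  destruct (Rmin_spec u1 u2) as [Hm1 [Hm2 Hm3]].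
  destruct (Rmin_spec (Rmin u1 u2) (lb - th * lb)) as [Ha'1 [Ha'2 Ha'3]]. fold a' in Ha'1, Ha'2, Ha'3.
  assert (Hwin : forall ui, (ui = u1 \/ ui = u2) -> 0 <= ui <= lb ->
     (Rabs (u1 - u2) <= th * lb + E) ->
     exists w, a' <= w <= a' + th * lb /\ 0 <= w <= lb /\ Rabs (ui - w) <= E).
  { intros ui Hui0 Hui Hdiff. set (w := Rmin ui (a' + th * lb)). exists w.
    destruct (Rmin_spec ui (a' + th * lb)) as [Hw1 [Hw2 Hw3]]. fold w in Hw1, Hw2, Hw3.
    assert (HE : 0 <= E) by lra.
    revert Hdiff. unfold Rabs; repeat destruct Rcase_abs;
    destruct Ha'3; destruct Hm3; destruct Hw3; destruct Hui0; intros; lra. }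
  assert (Hdiff : Rabs (u1 - u2) <= th * lb + E).
  { revert Hq1 Hq2. unfold Rabs; repeat destruct Rcase_abs; intros; lra. }
  exists a'. split.
  { destruct Ha'3 as [e|e]; rewrite e; [destruct Hm3 as [e'|e']; rewrite e'|]; lra. }
  split.
  { destruct Ha'3 as [e|e]; rewrite e; [destruct Hm3 as [e'|e']; rewrite e'|]; lra. }
  exists t. split; intros eps He.
  - destruct (Hwin u1 (or_introl eq_refl) Hu1 Hdiff) as [w [Hw1 [Hw2 Hw3]]].
    exists (be w). split; [exists w; split; [lra|reflexivity]|].
    pose proof (mtri (act t o) (be u1) (be w)). pose proof (msym (act t o) (be u1)).
    pose proof (geo_le Hb Hu1 Hw2). lra.
  - destruct (Hwin u2 (or_intror eq_refl) Hu2 Hdiff) as [w [Hw1 [Hw2 Hw3]]].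
    exists (be w). split; [exists w; split; [lra|reflexivity]|].
    pose proof (mtri (act (gmul t h) o) (be u2) (be w)). pose proof (msym (act (gmul t h) o) (be u2)).
    pose proof (geo_le Hb Hu2 Hw2). lra.
Qed.
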